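(* Let $G_1,\ldots,G_k$ be connected graphs whose vertex sets are pairwise disjoint except that a vertex $a$ belongs to every $G_i$. Suppose that no $G_i$ is $a$-outer geometric 1-planar and that each $G_i$ has at most $m$ edges. If $k\ge m+2$, then $\bigcup_{i=1}^k G_i$ is not geometric 1-planar.
   Context: Graphs are finite and simple. An embedding of a graph maps vertices to distinct points of $\mathbb{R}^2$ and each edge to a Jordan arc between its endpoints, such that edges intersect only at common endpoints or in proper crossings. An embedding is 1-planar if every edge is crossed at most once, and geometric if every edge is a straight-line segment; a graph is geometric 1-planar if it has a geometric 1-planar embedding. The outer region of an embedding is the unbounded connected component of $\mathbb{R}^2$ minus the union of all edge arcs. $G$ is $a$-outer geometric 1-planar if it has a geometric 1-planar embedding in which $a$ lies on the outer region. *)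

(* Defs.v *)
From HB Require Import structures.
From mathcomp Require Import all_boot all_order all_algebra.
From mathcomp Require Import all_classical all_reals all_analysis.
From mathcomp Require Import Rstruct Rstruct_topology.
Set Implicit Arguments. Unset Strict Implicit. Unset Printing Implicit Defensive.
Import Order.TTheory GRing.Theory Num.Theory.
Local Open Scope ring_scope.

Notation RR := Rdefinitions.R.
Definition point := (RR * RR)%type.

Record sgraph (T : finType) := SGraph { gV : {set T}; gE : rel T }.

Definition simple_graph (T : finType) (G : sgraph T) : Prop :=
  [/\ symmetric (gE G), irreflexive (gE G) &
      forall x y, gE G x y -> x \in gV G /\ y \in gV G].

Definition edges (T : finType) (G : sgraph T) : {set {set T}} :=
  [set [set x; y] | x in gV G, y in gV G & gE G x y].

Definition gconnected (T : finType) (G : sgraph T) : Prop :=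
  forall x y, x \in gV G -> y \in gV G -> connect (gE G) x y.

Definition gunion (T : finType) (k : nat) (Gs : 'I_k -> sgraph T) : sgraph T :=
  SGraph (\bigcup_(i < k) gV (Gs i)) (fun x y => [exists i, gE (Gs i) x y]).

Definition seg (P Q : point) : set point :=
  [set X | exists2 t : RR, 0 <= t <= 1 &
     X = (P.1 + t * (Q.1 - P.1), P.2 + t * (Q.2 - P.2))]%classic.
Definition oseg (P Q : point) : set point :=
  [set X | exists2 t : RR, 0 < t < 1 &
     X = (P.1 + t * (Q.1 - P.1), P.2 + t * (Q.2 - P.2))]%classic.

Section Embedding.
Variables (T : finType) (G : sgraph T) (p : T -> point).

Definition crossing (u v x y : T) : Prop :=
  [disjoint [set u; v] & [set x; y]] /\
  exists z0, ((seg (p u) (p v) `&` seg (p x) (p y)) = [set z0])%classic /\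
             oseg (p u) (p v) z0 /\ oseg (p x) (p y) z0.

Definition geo_embedding : Prop :=
  [/\ {in gV G &, injective p},
      (forall u v w, gE G u v -> w \in gV G -> ~ oseg (p u) (p v) (p w)) &
      (forall u v x y, gE G u v -> gE G x y -> [set u; v] != [set x; y] ->
         forall z, seg (p u) (p v) z -> seg (p x) (p y) z ->
           (exists2 w, w \in [set u; v] :&: [set x; y] & z = p w)
           \/ crossing u v x y)].

Definition one_planar_emb : Prop :=
  forall u v x y x' y', gE G u v -> gE G x y -> gE G x' y' ->
    crossing u v x y -> crossing u v x' y' -> [set x; y] = [set x'; y'].

Definition geo_1planar_emb : Prop := geo_embedding /\ one_planar_emb.

Definition drawing : set point :=
  [set z | exists u v, gE G u v /\ seg (p u) (p v) z]%classic.

Definition unbounded (C : set point) : Prop :=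
  forall M : RR, exists2 z, C z & M < Num.max `|z.1| `|z.2|.

Definition on_outer_region (a : T) : Prop :=
  exists z, (~` drawing)%classic z /\
    unbounded (connected_component (~` drawing)%classic z) /\
    closure (connected_component (~` drawing)%classic z) (p a).
End Embedding.

Definition geometric_1planar (T : finType) (G : sgraph T) : Prop :=
  exists p : T -> point, geo_1planar_emb G p.

Definition outer_geometric_1planar (T : finType) (G : sgraph T) (a : T) : Prop :=
  exists p : T -> point, geo_1planar_emb G p /\ on_outer_region G p a.

(* Main.v *)
Require Import Defs.
From HB Require Import structures.
From mathcomp Require Import all_boot all_order all_algebra.
From mathcomp Require Import all_classical all_reals all_analysis.
From mathcomp Require Import Rstruct Rstruct_topology.
From mathcomp.algebra_tactics Require Import ring lra.
From mathcomp Require Import zify.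

Section Helpers.
Import Order.TTheory GRing.Theory Num.Theory.
Local Open Scope ring_scope.
Local Open Scope classical_set_scope.

Definition lin (P Q : Defs.point) (t : RR) : Defs.point :=
  (P.1 + t * (Q.1 - P.1), P.2 + t * (Q.2 - P.2)).

Lemma aff_cont (c d : RR) : continuous (fun t : RR => c + t * d).
Proof.
move=> s.
have := @cvgD RR RR^o _ _ _ (fun=> c) (fun t : RR => t * d) c (s * d) (cvg_cst c).
apply.
have := @cvgMr_tmp RR _ _ _ (fun t : RR => t) s d cvg_id.
move=> h; exact: h.
Qed.

Lemma lin_cont P Q : continuous (lin P Q).
Proof.
move=> t; rewrite /lin.
exact: (cvg_pair (aff_cont _ _ t) (aff_cont _ _ t)).
Qed.

Lemma lin0 P Q : lin P Q 0 = P.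
Proof. by case: P => x y; rewrite /lin !mul0r !addr0. Qed.
Lemma lin1 P Q : lin P Q 1 = Q.
Proof. by case: P => x y; case: Q => u v; rewrite /lin !mul1r /= !subrKC. Qed.

Lemma linE P Q s1 s2 u :
  lin (lin P Q s1) (lin P Q s2) u = lin P Q (s1 + u * (s2 - s1)).
Proof. rewrite /lin /=; congr (_, _); ring. Qed.

Lemma seg_cc (A : set Defs.point) P Q :
  (forall t : RR, 0 <= t <= 1 -> A (lin P Q t)) -> connected_component A P Q.
Proof.
move=> HA; exists (lin P Q @` `[0, 1]); last first.
  by exists 1; [rewrite /= in_itv /= lexx ler01 | exact: lin1].
split.
- by exists 0; [rewrite /= in_itv /= lexx ler01 | exact: lin0].
- by move=> _ [t ht <-]; apply: HA; move: ht; rewrite /= in_itv.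
- apply: connected_continuous_connected; first exact: segment_connected.
  by apply: continuous_subspaceT => t; exact: lin_cont.
Qed.

Lemma seg_cc2 (A : set Defs.point) P Q s1 s2 : s1 <= s2 ->
  (forall t : RR, s1 <= t <= s2 -> A (lin P Q t)) ->
  connected_component A (lin P Q s1) (lin P Q s2).
Proof.
move=> h12 HA; apply: seg_cc => u /andP[u0 u1]; rewrite linE; apply: HA.
apply/andP; split; nra.
Qed.

Lemma seg_closure (C : set Defs.point) P Q :
  (forall t : RR, 0 < t <= 1 -> C (lin P Q t)) -> closure C P.
Proof.
move=> HC B nB.
rewrite -(lin0 P Q) in nB.
have := lin_cont P Q 0 B nB => /= h.
have : \forall t \near (0:RR)^'+, (lin P Q @^-1` B) t /\ 0 < t <= 1.
  near=> t; split; last (apply/andP; split).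
  - by near: t; apply: cvg_within.
  - by near: t; exact: nbhs_right_gt.
  - by near: t; exact: nbhs_right_le.
move=> /filter_ex [t [Bt ht]].
by exists (lin P Q t); split => //; apply: HC.
Unshelve. all: by end_near.
Qed.

Lemma seg_sym P Q : seg P Q = seg Q P.
Proof.
apply/seteqP; split => z [t /andP[t0 t1] ->]; exists (1 - t);
  (try by apply/andP; split; lra); congr (_, _); ring.
Qed.

Lemma oseg_sym P Q : oseg P Q = oseg Q P.
Proof.
apply/seteqP; split => z [t /andP[t0 t1] ->]; exists (1 - t);
  (try by apply/andP; split; lra); congr (_, _); ring.
Qed.

Lemma crossing_sym (T : finType) (p : T -> Defs.point) x y u v :
  crossing p x y u v -> crossing p y x u v.
Proof.
move=> [d [z0 [h1 [h2 h3]]]]; split; first by rewrite (finset.setUC [set y]).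
by exists z0; rewrite (seg_sym (p y)) (oseg_sym (p y)).
Qed.

Lemma seg_lin P Q z : seg P Q z -> exists2 t, 0 <= t <= 1 & z = lin P Q t.
Proof. by []. Qed.

Lemma unb (A : set Defs.point) P s :
  (forall t, s <= t -> A (lin P (P.1 + 1, P.2) t)) ->
  unbounded (connected_component A (lin P (P.1 + 1, P.2) s)).
Proof.
move=> HA M.
pose t := `|M| + `|P.1| + `|s| + 1.
have st : s <= t.
  have := ler_norm s; have := normr_ge0 M; have := normr_ge0 P.1; rewrite /t; lra.
exists (lin P (P.1 + 1, P.2) t).
  apply: seg_cc2 => // u /andP[su _]; exact: HA.
apply: (@lt_le_trans _ _ `|(lin P (P.1 + 1, P.2) t).1|); last by rewrite le_max lexx.
apply: (@lt_le_trans _ _ (lin P (P.1 + 1, P.2) t).1); last exact: ler_norm.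
rewrite /= /t.
have := ler_norm M; have := ler_normlW (lexx `|P.1|); have := normr_ge0 s.
have : - P.1 <= `|P.1| by rewrite -normrN ler_norm.
lra.
Qed.


End Helpers.

Section Helpers2.
Import Order.TTheory GRing.Theory Num.Theory.
Local Open Scope ring_scope.

Lemma seq_max (T : eqType) (f : T -> RR) (s : seq T) x0 : x0 \in s ->
  exists2 w, w \in s & forall u, u \in s -> f u <= f w.
Proof.
elim: s x0 => [//|y s IH] x0 _.
case: s IH => [|z s] IH.
  by exists y; rewrite ?mem_seq1 // => u; rewrite mem_seq1 => /eqP ->.
have [w ws Hw] := IH z (mem_head _ _).
have [fyw|fwy] := leP (f y) (f w).
- exists w; first by rewrite in_cons ws orbT.
  move=> u; rewrite in_cons => /orP[/eqP ->|]; [done | exact: Hw].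
- exists y; first exact: mem_head.
  move=> u; rewrite in_cons => /orP[/eqP ->|/Hw h]; [done | exact: le_trans h (ltW fwy)].
Qed.

Lemma set2_cases (T : finType) (x1 y1 x2 y2 : T) :
  [set x1; y1] = [set x2; y2] -> x1 != y1 ->
  (x2 = x1 /\ y2 = y1) \/ (x2 = y1 /\ y2 = x1).
Proof.
move=> E n.
have h2 : x2 \in [set x1; y1] by rewrite E set21.
have h3 : y2 \in [set x1; y1] by rewrite E set22.
have h0 : x1 \in [set x2; y2] by rewrite -E set21.
have h1 : y1 \in [set x2; y2] by rewrite -E set22.
rewrite !in_set2 in h0 h1 h2 h3.
case/orP: h2 => /eqP e2; case/orP: h3 => /eqP e3; subst x2 y2.
- by rewrite orbb eq_sym (negbTE n) in h1.
- by left.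
- by right.
- by rewrite orbb (negbTE n) in h0.
Qed.

End Helpers2.

Import Order.TTheory GRing.Theory Num.Theory.

Theorem mainTheorem11 (T : finType) (k m : nat) (Gs : 'I_k -> sgraph T) (a : T) :
  (forall i, simple_graph (Gs i)) ->
  (forall i, gconnected (Gs i)) ->
  (forall i, a \in gV (Gs i)) ->
  (forall i j, i != j -> gV (Gs i) :&: gV (Gs j) = [set a]) ->
  (forall i, ~ outer_geometric_1planar (Gs i) a) ->
  (forall i, #|edges (Gs i)| <= m) ->
  m + 2 <= k ->
  ~ geometric_1planar (gunion Gs).
Proof.
move=> Hs Hc Ha Hd Hno Hm Hk [p [[Hinj H2 H3] H1P]].
have inU : forall i x, x \in gV (Gs i) -> x \in gV (gunion Gs).
  by move=> i x hx; apply/bigcupP; exists i.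
have EU : forall i x y, gE (Gs i) x y -> gE (gunion Gs) x y.
  by move=> i x y h; apply/existsP; exists i.
have Hsub : forall i x y, gE (Gs i) x y ->
    [/\ x \in gV (Gs i), y \in gV (Gs i) & x != y].
  move=> i x y h; have [_ irr hv] := Hs i; have [hx hy] := hv _ _ h.
  split=> //; apply/eqP => exy; subst y; by rewrite irr in h.
have Hdisj : forall i j x, i != j -> x \in gV (Gs i) -> x \in gV (Gs j) -> x = a.
  move=> i j x ij hi hj; move: (Hd i j ij) => /setP /(_ x).
  by rewrite finset.in_setI hi hj finset.in_set1 => /esym /eqP.
have Hres : forall j, geo_1planar_emb (Gs j) p.
  move=> j; split; [split|].
  - by move=> x y hx hy; apply: Hinj; [apply: inU hx | apply: inU hy].
  - by move=> u v w huv hw; apply: H2 (EU _ _ _ huv) (inU _ _ hw).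
  - by move=> u v x y huv hxy; apply: H3 (EU _ _ _ huv) (EU _ _ _ hxy).
  - by move=> u v x y x' y' h1 h2 h3; apply: H1P (EU _ _ _ h1) (EU _ _ _ h2) (EU _ _ _ h3).
have k0 : (0 < k)%N by apply: leq_trans Hk; rewrite addn2.
pose i0 : 'I_k := Ordinal k0.
have aU : a \in enum (gV (gunion Gs)) by rewrite mem_enum; exact: inU i0 a (Ha i0).
have [w wU Hw] := @seq_max _ (fun x => (p x).1) _ _ aU.
rewrite mem_enum in wU.
have {}Hw : forall u, u \in gV (gunion Gs) -> ((p u).1 <= (p w).1)%R.
  by move=> u hu; apply: Hw; rewrite mem_enum.
pose Q1 : Defs.point := (((p w).1 + 1)%R, (p w).2).
have Hray : forall j t, (0 < t)%R -> ~ drawing (Gs j) p (lin (p w) Q1 t).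
  move=> j t t0 [u [v [huv [s /andP[s0 s1] e]]]].
  have [hu hv _] := Hsub _ _ _ huv.
  have := Hw u (inU _ _ hu); have := Hw v (inU _ _ hv).
  have := congr1 fst e; rewrite /lin /Q1 /= => e1.
  nra.
have [wa|wa] := eqVneq w a.
  apply: (Hno i0); exists p; split; first exact: Hres.
  exists (lin (p w) Q1 1%R); split; first exact: (Hray i0 1%R ltr01).
  split.
    apply: unb => t t1; apply: Hray; exact: lt_le_trans ltr01 t1.
  rewrite -wa; apply: (@seg_closure _ (p w) Q1) => t /andP[t0 t1].
  apply: connected_component_sym; apply: seg_cc2 => // u /andP[tu _].
  by apply: Hray; exact: lt_le_trans tu.
have /bigcupP [i _ wi] := wU.
have [j ji noX] : exists2 j : 'I_k, j != i & forall x y u v,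
    gE (Gs i) x y -> gE (Gs j) u v -> ~ crossing p x y u v.
  apply: contrapT => Hn.
  have Hx : forall j : 'I_k, exists e : {set T}, j != i -> exists x y u v,
      [/\ e = [set x; y], gE (Gs i) x y, gE (Gs j) u v & crossing p x y u v].
    move=> j; have [->|ji] := eqVneq j i; first by exists finset.set0 => /negP.
    apply: contrapT => Hne; apply: Hn; exists j => // x y u v hxy huv hc.
    by apply: Hne; exists [set x; y] => _; exists x, y, u, v.
  have [e He] := choice Hx.
  have inj_e : {in [set~ i] &, injective e}.
    move=> j1 j2; rewrite !in_setC1 => j1i j2i e12.
    apply/eqP; apply: contraT => j12.
    have [x1 [y1 [u1 [v1 [E1 h1 g1 c1]]]]] := He j1 j1i.
    have [x2 [y2 [u2 [v2 [E2 h2 g2 c2]]]]] := He j2 j2i.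
    have [xi yi xy] := Hsub _ _ _ h1.
    have c2' : crossing p x1 y1 u2 v2.
      have : [set x1; y1] = [set x2; y2] by rewrite -E1 -E2 e12.
      move/set2_cases => /(_ xy) [[ex ey]|[ex ey]]; subst x2 y2 => //.
      exact: crossing_sym.
    have Euv := H1P _ _ _ _ _ _ (EU _ _ _ h1) (EU _ _ _ g1) (EU _ _ _ g2) c1 c2'.
    have [uj vj uv] := Hsub _ _ _ g1.
    have [uj2 vj2 _] := Hsub _ _ _ g2.
    have Hc2 : forall c, c \in [set u1; v1] -> c != a -> False.
      move=> c hc ca; have hc2 : c \in [set u2; v2] by rewrite -Euv.
      have cj1 : c \in gV (Gs j1) by move: hc; rewrite in_set2 => /orP[/eqP->|/eqP->].
      have cj2 : c \in gV (Gs j2) by move: hc2; rewrite in_set2 => /orP[/eqP->|/eqP->].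
      by move/eqP: ca; apply; apply: Hdisj j12 cj1 cj2.
    suff : False by [].
    have [ua|ua] := eqVneq u1 a.
      apply: (Hc2 v1); first exact: set22.
      by apply: contraNneq uv => ->; rewrite ua.
    exact: (Hc2 u1 (set21 _ _) ua).
  have : (#|[set~ i]| <= m)%N.
    rewrite -(card_in_imset inj_e); apply: leq_trans (Hm i).
    apply: subset_leq_card; apply/fintype.subsetP => _ /imsetP[j ji ->].
    rewrite in_setC1 in ji.
    have [x [y [u [v [-> h _ _]]]]] := He j ji.
    have [xi yi _] := Hsub _ _ _ h.
    by apply/imset2P; exists x y => //; rewrite inE yi h.
  rewrite cardsC1 card_ord => hkm.
  lia.
have ij : i != j by rewrite eq_sym.
apply: (Hno j); exists p; split; first exact: Hres.
set A := (~` drawing (Gs j) p)%classic.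
have HV : forall x, x \in gV (Gs i) -> x != a -> A (p x).
  move=> x xi xa [u [v [huv [t /andP[t0 t1] e]]]].
  have [hu hv _] := Hsub _ _ _ huv.
  have e' : p x = lin (p u) (p v) t by exact: e.
  have xu : forall y, y \in gV (Gs j) -> p x = p y -> False.
    move=> y yj pxy; have exy := Hinj _ _ (inU _ _ xi) (inU _ _ yj) pxy; subst y.
    by move/eqP: xa; apply; exact: Hdisj ij xi yj.
  rewrite le_eqVlt in t0; case/orP: t0 => [/eqP t0|t0].
    by apply: (xu u hu); rewrite e' -t0 lin0.
  rewrite le_eqVlt in t1; case/orP: t1 => [/eqP t1|t1].
    by apply: (xu v hv); rewrite e' t1 lin1.
  apply: (H2 _ _ _ (EU _ _ _ huv) (inU _ _ xi)).
  by exists t; [rewrite t0 t1 | exact: e].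
have HG : forall x y z, gE (Gs i) x y -> y != a -> seg (p x) (p y) z ->
    drawing (Gs j) p z -> x = a /\ z = p a.
  move=> x y z hxy ya hz [u [v [huv hz']]].
  have [xi yi xy] := Hsub _ _ _ hxy.
  have [uj vj _] := Hsub _ _ _ huv.
  have ne : [set x; y] != [set u; v].
    apply/negP => /eqP E.
    have : y \in [set u; v] by rewrite -E set22.
    rewrite in_set2 => /orP[/eqP yu|/eqP yv]; subst y.
    - by move/eqP: ya; apply; exact: Hdisj ij yi uj.
    - by move/eqP: ya; apply; exact: Hdisj ij yi vj.
  case: (H3 _ _ _ _ (EU _ _ _ hxy) (EU _ _ _ huv) ne z hz hz') => [[w0 hw0 ->]|hc];
    last by exfalso; exact: noX hxy huv hc.
  rewrite finset.in_setI !in_set2 in hw0; case/andP: hw0 => hw1 hw2.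
  have w0i : w0 \in gV (Gs i) by case/orP: hw1 => /eqP->.
  have w0j : w0 \in gV (Gs j) by case/orP: hw2 => /eqP->.
  have w0a := Hdisj _ _ _ ij w0i w0j; subst w0.
  split => //; case/orP: hw1 => /eqP // ay.
  by rewrite ay eqxx in ya.
pose C := connected_component A (lin (p w) Q1 0%R).
have Hstep : forall x y, gE (Gs i) x y -> x != a -> y != a -> C (p x) -> C (p y).
  move=> x y hxy xa ya Cx; apply: connected_component_trans Cx _.
  have := @seg_cc2 A (p x) (p y) 0%R 1%R ler01; rewrite lin0 lin1; apply.
  move=> t ht hd.
  have hs : seg (p x) (p y) (lin (p x) (p y) t) by exists t.
  have [xa' _] := HG x y _ hxy ya hs hd.
  by rewrite xa' eqxx in xa.
have Hlast : forall x, gE (Gs i) x a -> x != a -> C (p x) -> closure C (p a).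
  move=> x hxa xa Cx.
  have hax : gE (Gs i) a x by have [sym _ _] := Hs i; rewrite sym.
  apply: (@seg_closure C (p a) (p x)) => t /andP[t0 t1].
  apply: connected_component_trans Cx _; apply: connected_component_sym.
  have := @seg_cc2 A (p a) (p x) t 1%R t1; rewrite lin1; apply.
  move=> u /andP[tu u1] hd.
  have u0 : (0 < u)%R by exact: lt_le_trans tu.
  have tu' : (0 <= u)%R := ltW u0.
  have hs : seg (p a) (p x) (lin (p a) (p x) u) by exists u => //; rewrite tu' u1.
  have [_ e] := HG a x _ hax xa hs hd.
  have e1 := congr1 fst e; have e2 := congr1 snd e; rewrite /lin /= in e1 e2.
  have d1 : (u * ((p x).1 - (p a).1) = 0)%R by lra.
  have d2 : (u * ((p x).2 - (p a).2) = 0)%R by lra.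
  move/eqP: d1; move/eqP: d2; rewrite !mulf_eq0 (gt_eqF u0) /= !subr_eq0 => /eqP d2 /eqP d1.
  have pxa : p x = p a by move: d1 d2; case: (p x) => ? ?; case: (p a) => ? ? /= -> ->.
  have [xi' _ _] := Hsub _ _ _ hxa.
  have := Hinj _ _ (inU _ _ xi') (inU _ _ (Ha i)) pxa.
  by move=> exa; rewrite exa eqxx in xa.
have Hpath : forall s x, C (p x) -> x != a -> path (gE (Gs i)) x s ->
    last x s = a -> closure C (p a).
  elim=> [|y s IH] x Cx xa /=; first by move=> _ xa'; rewrite xa' eqxx in xa.
  case/andP=> hxy hp hl; have [ya|ya] := eqVneq y a.
    by rewrite ya in hxy; apply: Hlast hxy xa Cx.
  by apply: IH hp hl => //; exact: Hstep hxy xa ya Cx.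
have /connectP [s hp hl] := Hc i w a wi (Ha i).
have A0 : A (lin (p w) Q1 0%R) by rewrite lin0; exact: HV w wi wa.
exists (lin (p w) Q1 0%R); split => //; split.
  apply: unb => t; rewrite le_eqVlt => /orP[/eqP <-|t0] //.
  exact: Hray j t t0.
apply: (Hpath s w); try done.
have -> : p w = lin (p w) Q1 0%R by rewrite lin0.
exact: connected_component_refl.
Qed.
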